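(* Let $G$ be a connected weighted multigraph on the vertex set $V$, $|V|=n\ge 2$, with positive edge weights, weighted adjacency matrix $A$ and spectral radius $\rho$. For $\alpha>0$ put $t=(\rho+\alpha^{-1})^{-1}\in(0,\rho^{-1})$, $R_t=(I-tA)^{-1}=(r_{ij}(t))$, and $$d^{W}_\alpha(i,j)=\theta\Bigl(\tfrac12\bigl(\ln r_{ii}(t)+\ln r_{jj}(t)\bigr)-\ln r_{ij}(t)\Bigr),\qquad \theta=\ln\bigl(e+\alpha^{2/n}\bigr)\frac{\alpha-1}{\ln\alpha}$$ (with $\theta=\ln(e+1)$ when $\alpha=1$). Then for all $i,j\in V$, $$\lim_{\alpha\to0^+}d^{W}_\alpha(i,j)=d^{s}(i,j),$$ where $d^s(i,j)$ is the shortest path distance, i.e. the minimum number of edges of a path between $i$ and $j$ in $G$.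
   Context: $G$ may have loops and multiple edges; $A=(a_{ij})$ has $a_{ij}$ equal to the sum of the weights of the edges joining $i$ and $j$. *)

(* Defs.v *)
From HB Require Import structures.
From mathcomp Require Import all_boot all_order all_algebra.
From mathcomp Require Import all_classical all_reals all_analysis.
Set Implicit Arguments. Unset Strict Implicit. Unset Printing Implicit Defensive.
Import Order.TTheory GRing.Theory Num.Theory.
Import numFieldNormedType.Exports.
Local Open Scope classical_set_scope.
Local Open Scope ring_scope.

(* A weighted multigraph (loops, multiple edges, positive weights) on 'I_n is
   encoded by its weighted adjacency matrix A: a_ij = sum of weights of edges
   joining i and j. *)
Definition wadj_matrix (R : realType) (n : nat) (A : 'M[R]_n) : Prop :=
  (forall i j, 0 <= A i j) /\ A^T = A.

Definition adj (R : realType) (n : nat) (A : 'M[R]_n) : rel 'I_n :=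
  fun i j => 0 < A i j.

Definition connected_graph (R : realType) (n : nat) (A : 'M[R]_n) : Prop :=
  forall i j : 'I_n, exists s : seq 'I_n, path (adj A) i s /\ last i s = j.

Definition is_path (R : realType) (n : nat) (A : 'M[R]_n) (i j : 'I_n)
    (s : seq 'I_n) : Prop :=
  path (adj A) i s /\ last i s = j /\ uniq (i :: s).

Definition sp_dist (R : realType) (n : nat) (A : 'M[R]_n) (i j : 'I_n)
    (k : nat) : Prop :=
  (exists s, is_path A i j s /\ size s = k) /\
  (forall s, is_path A i j s -> (k <= size s)%N).

(* spectral radius: max modulus of the eigenvalues (A is real symmetric, so
   all its eigenvalues are real) *)
Definition specrad (R : realType) (n : nat) (A : 'M[R]_n) : R :=
  sup [set `|a| | a in [set a : R | eigenvalue A a]].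

Definition theta (R : realType) (n : nat) (alpha : R) : R :=
  if alpha == 1 then ln (expR 1 + 1)
  else ln (expR 1 + alpha `^ (2 / n%:R)) * ((alpha - 1) / ln alpha).

Definition resolvent_t (R : realType) (n : nat) (A : 'M[R]_n) (alpha : R)
  : 'M[R]_n :=
  let t := (specrad A + alpha^-1)^-1 in invmx (1%:M - t *: A).

Definition dW (R : realType) (n : nat) (A : 'M[R]_n) (alpha : R)
    (i j : 'I_n) : R :=
  let r := resolvent_t A alpha in
  theta n alpha * ((ln (r i i) + ln (r j j)) / 2 - ln (r i j)).

(* Main.v *)
Require Import Defs.
From HB Require Import structures.
From mathcomp Require Import all_boot all_order all_algebra.
From mathcomp Require Import all_classical all_reals all_analysis.
From mathcomp Require Import ring lra.
Import Order.TTheory GRing.Theory Num.Theory.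
Import numFieldNormedType.Exports.
Local Open Scope classical_set_scope.
Local Open Scope ring_scope.

Section Bound.
Variables (R : realType) (n : nat) (A : 'M[R]_n.+1).
Definition SA := \sum_l \sum_j `|A l j|.

Lemma col_le_SA j0 : \sum_l `|A l j0| <= SA.
Proof.
apply: ler_sum => l _; rewrite (bigD1 j0) //= lerDl; exact: sumr_ge0.
Qed.

Lemma maxbound p (X Y : 'M[R]_(p.+1, n.+1)) (t b : R) :
  0 <= t -> t * SA <= 2^-1 -> X = Y + t *: (X *m A) ->
  (forall i j, `|Y i j| <= b) -> forall i j, `|X i j| <= b *+ 2.
Proof.
move=> t0 tS HX HY.
pose F := (fun q : 'I_p.+1 * 'I_n.+1 => (`|X q.1 q.2| : R)).
case: (@arg_maxP _ R _ (ord0, ord0) xpredT F isT) => [[i0 j0]] _ Hmax.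
have Hm : forall i j, `|X i j| <= `|X i0 j0| by move=> i j; exact: (Hmax (i, j)).
clear Hmax; set m := `|X i0 j0| in Hm *.
have Hm0 : m = `|X i0 j0| by []. clearbody m.
have m0 : 0 <= m by rewrite Hm0.

suff : m <= b + m / 2.
  move=> H i j; apply: (le_trans (Hm i j)).
  rewrite mulr2n; lra.
rewrite {1}Hm0 {1}HX !mxE; apply: (le_trans (ler_normD _ _)); apply: lerD => //.
rewrite normrM ger0_norm //.
apply: (@le_trans _ _ (t * (m * SA))).
  apply: ler_wpM2l => //; apply: (le_trans (ler_norm_sum _ _ _)).
  apply: (le_trans _ (ler_wpM2l m0 (col_le_SA j0))); rewrite mulr_sumr.
  apply: ler_sum => l _; rewrite normrM.
  by apply: ler_wpM2r => //.
rewrite mulrCA; have -> : m / 2 = 2^-1 * m by rewrite mulrC. rewrite (mulrC m); exact: ler_wpM2r.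
Qed.

Lemma resolvent_ok (t : R) : 0 <= t -> t * SA <= 2^-1 ->
  (1%:M - t *: A) \in unitmx /\
  let Rt := invmx (1%:M - t *: A) in
  Rt = 1%:M + t *: (Rt *m A) /\ forall i j, `|Rt i j| <= 2.
Proof.
move=> t0 tS.
have HU : (1%:M - t *: A) \in unitmx.
  rewrite unitmxE unitfE; apply/negP => /det0P [v vn0 Hv].
  have Hv' : v = 0 + t *: (v *m A).
    apply/eqP; rewrite add0r -subr_eq0 -Hv mulmxBr mulmx1 scalemxAr //.
  have := @maxbound 0 v 0 t 0 t0 tS Hv' (fun i j => ltac:(by rewrite mxE normr0)).
  move=> H; move/eqP: vn0; apply; apply/matrixP => i j.
  by apply/eqP; rewrite mxE -normr_le0 -(mul0rn _ 2); exact: H.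
split => //= ; set Rt := invmx _.
have HR : Rt = 1%:M + t *: (Rt *m A).
  have E : Rt *m (1%:M - t*:A) = Rt - t*:(Rt *m A) by rewrite mulmxBr mulmx1 scalemxAr.
  by apply/eqP; rewrite -subr_eq -E mulVmx.
split => //; move=> i j.
have := @maxbound n Rt 1%:M t 1 t0 tS HR.
move=> H; apply: H.
by move=> i' j'; rewrite mxE; case: eqP => _; rewrite ?normr1 ?normr0.
Qed.

Lemma resolvent_expand (t : R) (Rt : 'M[R]_n.+1) :
  Rt = 1 + t *: (Rt * A) -> forall N,
  Rt = \sum_(m < N) t ^+ m *: A ^+ m + t ^+ N *: (Rt * A ^+ N).
Proof.
move=> HR; elim => [|N IH]; first by rewrite big_ord0 add0r expr0 scale1r mulr1.
rewrite big_ord_recr /= {1}IH -addrA; congr (_ + _).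
rewrite {1}HR mulrDl mul1r scalerDr; congr (_ + _).
rewrite -scalerAl scalerA -exprSr -mulrA -exprS; done.
Qed.
End Bound.
Section Ana.
Variable R : realType.

Lemma invln0 : (fun x : R => (ln x)^-1) @ 0^'+ --> 0.
Proof.
apply/cvgr0Pnorm_le => e e0.
have H := (cvgrNyPle _).1 (@lnNy R) (- e^-1).
near=> x. have Hx : ln x <= - e^-1 by near: x; exact: H.
have lnneg : ln x < 0 by apply: (le_lt_trans Hx); rewrite oppr_lt0 invr_gt0.
rewrite normfV ltr0_norm // -[e]invrK lef_pV2 ?posrE ?invr_gt0 ?oppr_gt0 //.
by rewrite lerNr.
Unshelve. all: end_near.
Qed.

Lemma cvg_mul_bdd {T} {F : set_system T} {FF : Filter F} (f g : T -> R) (C : R) :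
  f @ F --> 0 -> (\forall x \near F, `|g x| <= C) ->
  (fun x => f x * g x) @ F --> 0.
Proof.
move=> f0 gC; apply/cvgr0Pnorm_le => e e0.
have C1 : 0 < `|C| + 1 by rewrite ltr_pwDr.
have := (cvgr0Pnorm_le f).1 f0 (e / (`|C| + 1)) (divr_gt0 e0 C1).
move=> Hf; near=> x.
have Hfx : `|f x| <= e / (`|C| + 1) by near: x; exact: Hf.
have Hgx : `|g x| <= C by near: x; exact: gC.
rewrite normrM; apply: (le_trans (ler_pM (normr_ge0 _) (normr_ge0 _) Hfx Hgx)).
have C0 : C <= `|C| + 1 by rewrite (le_trans (ler_norm C)) // lerDl.
rewrite mulrAC ler_pdivrMr // ler_wpM2l //; exact: ltW.
Unshelve. all: end_near.
Qed.
End Ana.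
Section Comb.
Variables (R : realType) (n : nat) (A : 'M[R]_n.+1).
Hypothesis A0 : forall i j, 0 <= A i j.

Lemma expA_ge0 m i j : 0 <= (A ^+ m) i j.
Proof.
elim: m i j => [|m IH] i j; first by rewrite expr0 mxE ler0n.
rewrite exprS -mulmxE mxE; apply: sumr_ge0 => l _; exact: mulr_ge0.
Qed.

Lemma expA_walk m i j : 0 < (A ^+ m) i j ->
  exists s, path (adj A) i s /\ last i s = j /\ size s = m.
Proof.
elim: m i j => [|m IH] i j.
  rewrite expr0 mxE; case: eqP => [->|]; last by rewrite ltxx.
  by exists [::].
rewrite exprS -mulmxE mxE => Hs.
have [l Hl] : exists l, 0 < A i l * (A ^+ m) l j.
  apply/not_existsP => H; move: Hs; rewrite big1 ?ltxx // => l _.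
  apply/eqP; rewrite eq_le mulr_ge0 ?expA_ge0 ?andbT //.
  by rewrite leNgt; apply/negP => /(H l).
have Hil : 0 < A i l.
  rewrite lt0r A0 andbT; apply/eqP => E; by rewrite E mul0r ltxx in Hl.
have Hlj : 0 < (A ^+ m) l j.
  rewrite lt0r expA_ge0 andbT; apply/eqP => E; by rewrite E mulr0 ltxx in Hl.
have [s [Hp [Hlast Hsz]]] := IH _ _ Hlj.
exists (l :: s); split; first by rewrite /= Hp andbT.
by split => //=; rewrite Hsz.
Qed.

Lemma path_expA s i : path (adj A) i s -> 0 < (A ^+ size s) i (last i s).
Proof.
elim: s i => [|l s IH] i /=; first by rewrite expr0 mxE eqxx ltr01.
move=> /andP [Hil Hp].
rewrite exprS -mulmxE mxE (bigD1 l) //=.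
apply: (@lt_le_trans _ _ (A i l * (A ^+ size s) l (last l s))).
  exact: mulr_gt0 (IH _ Hp).
rewrite lerDl; apply: sumr_ge0 => l' _; exact: mulr_ge0 (expA_ge0 _ _ _).
Qed.

Lemma sp_expA i j k : sp_dist A i j k ->
  0 < (A ^+ k) i j /\ forall m, (m < k)%N -> (A ^+ m) i j = 0.
Proof.
move=> [[s [[Hp [Hl Hu]] Hsz]] Hmin]; split.
  by rewrite -Hsz -Hl; exact: path_expA.
move=> m Hm; apply/eqP; rewrite eq_le expA_ge0 andbT leNgt; apply/negP.
move=> /expA_walk [s' [Hp' [Hl' Hsz']]].
case: (shortenP Hp') Hl' => p' Hp'' Hu' Hsub Hl''.
have Hle : (size p' <= size s')%N.
  by apply: uniq_leq_size => //; move: Hu' => /= /andP [].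
have := Hmin p'; rewrite /is_path Hp'' Hl'' => /(_ (conj erefl (conj erefl Hu'))).
move=> Hk; move: Hm; rewrite ltnNge; move/negP; apply.
by rewrite -Hsz'; exact: leq_trans Hk Hle.
Qed.
End Comb.

Section Entries.
Variables (R : realType) (n : nat).
Lemma entryDZ (M N : 'M[R]_n.+1) (t : R) i j : (M + t *: N) i j = M i j + t * N i j.
Proof. by rewrite !mxE. Qed.
Lemma entry_bound (M N : 'M[R]_n.+1) i j (B : R) :
  (forall i j, `|M i j| <= B) -> `|(M * N) i j| <= \sum_l B * `|N l j|.
Proof.
move=> HB; rewrite -mulmxE mxE; apply: (le_trans (ler_norm_sum _ _ _)).
apply: ler_sum => l _; rewrite normrM; exact: ler_wpM2r.
Qed.
End Entries.

Theorem theorem3 (R : realType) (n : nat) (A : 'M[R]_n) :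
  (2 <= n)%N ->
  wadj_matrix A ->
  connected_graph A ->
  forall (i j : 'I_n) (k : nat), sp_dist A i j k ->
    (fun alpha : R => dW A alpha i j) @ 0^'+ --> (k%:R : R).
Proof.
move=> n2 [A0 _] _ i j k Hsp.
case: n A i j Hsp A0 n2 => [//|n] A i j Hsp A0 _.
have [c0 cz] := @sp_expA R n A A0 i j k Hsp.
set c := (A ^+ k) i j in c0.
set rho := specrad A.
set S := @SA R n A.
pose tf (a : R) := (rho + a^-1)^-1.
pose Rf (a : R) := invmx (1%:M - tf a *: A).
pose Eij a := (Rf a * A ^+ k.+1) i j.
pose Eii a := (Rf a * A) i i.
pose Ejj a := (Rf a * A) j j.
pose L (a : R) := ln (expR 1 + a `^ (2 / n.+1%:R)).
have a0 : (fun a : R => a) @ 0^'+ --> (0 : R) := cvg_at_right_filter cvg_id.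
have rl : (fun a => rho * a + 1) @ 0^'+ --> (1 : R).
  have Hm : (fun a => rho * a) @ 0^'+ --> rho * 0 by apply: (cvgM (cvg_cst rho) a0).
  have Hc : (fun _ : R => (1:R)) @ 0^'+ --> (1:R) by apply: cvg_cst.
  have H : (fun a => rho * a + 1) @ 0^'+ --> rho * 0 + 1 by apply: (cvgD Hm Hc).
  by rewrite mulr0 add0r in H.
have tl : (fun a => a / (rho * a + 1)) @ 0^'+ --> (0 : R).
  have H : (fun a => a / (rho * a + 1)) @ 0^'+ --> (0 * 1^-1 : R).
    have Hv : (fun a => (rho * a + 1)^-1) @ 0^'+ --> (1^-1 : R).
      by apply: cvgV => //; exact: oner_neq0.
    by apply: (cvgM a0 Hv).
  by rewrite mul0r in H.
have Hrpos : \forall a \near 0^'+, 0 < rho * a + 1 by apply: (cvgr_gt 1 rl 0 ltr01).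
have Htf : \forall a \near 0^'+, a / (rho * a + 1) = tf a.
  near=> a.
  have ap : 0 < a by near: a; exact: nbhs_right_gt.
  have rp : 0 < rho * a + 1 by near: a; exact: Hrpos.
  rewrite /tf; have -> : rho + a^-1 = (rho * a + 1) / a.
    by rewrite mulrDl mulfK ?gt_eqF // mul1r.
  by rewrite invf_div.
have tf0 : tf @ 0^'+ --> (0 : R) by apply: (cvg_trans (near_eq_cvg Htf) tl).
have S0 : 0 <= S by apply: sumr_ge0 => l _; apply: sumr_ge0.
have Ht : \forall a \near 0^'+, 0 < tf a /\ tf a * S <= 2^-1.
  have d0 : 0 < 2^-1 / (S + 1) :> R by rewrite divr_gt0 // ltr_pwDr.
  near=> a.
  have ap : 0 < a by near: a; exact: nbhs_right_gt.
  have rp : 0 < rho * a + 1 by near: a; exact: Hrpos.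
  have Ea : a / (rho * a + 1) = tf a by near: a; exact: Htf.
  have tp : 0 < tf a by rewrite -Ea divr_gt0.
  have td : tf a < 2^-1 / (S + 1) by near: a; exact: (cvgr_lt 0 tf0 _ d0).
  split => //.
  apply: (le_trans (ler_wpM2r S0 (ltW td))).
  apply: (@le_trans _ _ (2^-1 / (S + 1) * (S + 1))).
    by apply: ler_wpM2l; [exact: ltW | rewrite lerDl].
  by rewrite divfK // gt_eqF // ltr_pwDr.
have Hbd : \forall a \near 0^'+, (forall i' j', `|Rf a i' j'| <= 2) /\
     Rf a = 1 + tf a *: (Rf a * A).
  near=> a.
  have [tp tS] : 0 < tf a /\ tf a * S <= 2^-1 by near: a; exact: Ht.
  have [_ /= [HR Hb]] := @resolvent_ok R n A (tf a) (ltW tp) tS.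
  split; first exact: Hb.
  by rewrite /Rf {1}HR idmxE mulmxE.
have Elim : forall (l1 l2 : 'I_n.+1) (N : 'M[R]_n.+1),
    (fun a => tf a * (Rf a * N) l1 l2) @ 0^'+ --> (0 : R).
  move=> l1 l2 N; apply: (@cvg_mul_bdd R _ _ _ _ _ (\sum_l 2 * `|N l l2|) tf0).
  near=> a; apply: entry_bound.
  by have [Hb _] : (forall i' j', `|Rf a i' j'| <= 2) /\ Rf a = 1 + tf a *: (Rf a * A)
    by near: a; exact: Hbd.
have Hcl : (fun a => c + tf a * Eij a) @ 0^'+ --> (c + 0 : R).
  by apply: (cvgD (cvg_cst c) (Elim i j (A ^+ k.+1))).
have Hil : (fun a => 1 + tf a * Eii a) @ 0^'+ --> (1 + 0 : R).
  by apply: (cvgD (cvg_cst (1:R)) (Elim i i A)).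
have Hjl : (fun a => 1 + tf a * Ejj a) @ 0^'+ --> (1 + 0 : R).
  by apply: (cvgD (cvg_cst (1:R)) (Elim j j A)).
rewrite addr0 in Hcl; rewrite addr0 in Hil; rewrite addr0 in Hjl.
have Hcp : \forall a \near 0^'+, 0 < c + tf a * Eij a by apply: (cvgr_gt c Hcl 0 c0).
have Hip : \forall a \near 0^'+, 0 < 1 + tf a * Eii a by apply: (cvgr_gt _ Hil _ ltr01).
have Hjp : \forall a \near 0^'+, 0 < 1 + tf a * Ejj a by apply: (cvgr_gt _ Hjl _ ltr01).
have lnc : (fun a => ln (c + tf a * Eij a)) @ 0^'+ --> ln c.
  by apply: (continuous_cvg _ (continuous_ln c0) Hcl).
have lnii : (fun a => ln (1 + tf a * Eii a)) @ 0^'+ --> (ln 1 : R).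
  by apply: (continuous_cvg _ (continuous_ln ltr01) Hil).
have lnjj : (fun a => ln (1 + tf a * Ejj a)) @ 0^'+ --> (ln 1 : R).
  by apply: (continuous_cvg _ (continuous_ln ltr01) Hjl).
have lnr : (fun a => ln (rho * a + 1)) @ 0^'+ --> (ln 1 : R).
  by apply: (continuous_cvg _ (continuous_ln ltr01) rl).
rewrite ln1 in lnii; rewrite ln1 in lnjj; rewrite ln1 in lnr.
have p0 : (fun a => a `^ (2 / n.+1%:R)) @ 0^'+ --> (0:R).
  by apply: powR_cvg0; rewrite divr_gt0.
have q : (fun a => expR 1 + a `^ (2 / n.+1%:R)) @ 0^'+ --> (expR 1 + 0 : R).
  by apply: (cvgD (cvg_cst _) p0).
rewrite addr0 in q.
have HL : L @ 0^'+ --> ln (expR 1 : R).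
  by apply: (continuous_cvg _ (continuous_ln (expR_gt0 1)) q).
rewrite expRK in HL.
have Ham1 : (fun a => a - 1) @ 0^'+ --> (0 - 1 : R) by apply: (cvgB a0 (cvg_cst (1:R))).
have Hth : (fun a => L a * (a - 1) * (ln a)^-1) @ 0^'+ --> (1 * (0 - 1) * 0 : R).
  by apply: (cvgM (cvgM HL Ham1) (@invln0 R)).
have HX : (fun a => (ln (1 + tf a * Eii a) + ln (1 + tf a * Ejj a)) / 2
                    - ln (c + tf a * Eij a)) @ 0^'+ --> ((0 + 0) / 2 - ln c : R).
  have Hs : (fun a => (ln (1 + tf a * Eii a) + ln (1 + tf a * Ejj a)) / 2) @ 0^'+
     --> ((0 + 0) / 2 : R) by apply: (cvgM (cvgD lnii lnjj) (cvg_cst (2^-1 : R))).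
  by apply: (cvgB Hs lnc).
have HM : (fun a => L a * (a - 1) * (1 - ln (rho * a + 1) * (ln a)^-1)) @ 0^'+
     --> (1 * (0 - 1) * (1 - 0 * 0) : R).
  by apply: (cvgM (cvgM HL Ham1) (cvgB (cvg_cst (1:R)) (cvgM lnr (@invln0 R)))).
pose G a := L a * (a - 1) * (ln a)^-1 * ((ln (1 + tf a * Eii a) + ln (1 + tf a * Ejj a)) / 2
                    - ln (c + tf a * Eij a)) - k%:R * (L a * (a - 1) * (1 - ln (rho * a + 1) * (ln a)^-1)).
have HG : G @ 0^'+ --> (1 * (0 - 1) * 0 * ((0 + 0) / 2 - ln c) - k%:R * (1 * (0 - 1) * (1 - 0 * 0)) : R).
  by apply: (cvgB (cvgM Hth HX) (cvgM (cvg_cst _) HM)).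
have E : (1 * (0 - 1) * 0 * ((0 + 0) / 2 - ln c) - k%:R * (1 * (0 - 1) * (1 - 0 * 0)) : R) = k%:R.
  by ring.
rewrite E in HG.
have Heq : \forall a \near 0^'+, G a = dW A a i j.
  near=> a.
  have ap : 0 < a by near: a; exact: nbhs_right_gt.
  have alt1 : a < 1 by near: a; exact: nbhs_right_lt ltr01.
  have rp : 0 < rho * a + 1 by near: a; exact: Hrpos.
  have Ea : a / (rho * a + 1) = tf a by near: a; exact: Htf.
  have [tp tS] : 0 < tf a /\ tf a * S <= 2^-1 by near: a; exact: Ht.
  have [Hb HR] : (forall i' j', `|Rf a i' j'| <= 2) /\ Rf a = 1 + tf a *: (Rf a * A)
    by near: a; exact: Hbd.
  have cp : 0 < c + tf a * Eij a by near: a; exact: Hcp.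
  have ip : 0 < 1 + tf a * Eii a by near: a; exact: Hip.
  have jp : 0 < 1 + tf a * Ejj a by near: a; exact: Hjp.
  have rdiag : forall l, Rf a l l = 1 + tf a * (Rf a * A) l l.
    move=> l; rewrite {1}(@resolvent_expand R n A (tf a) (Rf a) HR 1) big_ord1 !expr0 scale1r !expr1 entryDZ -idmxE.
    by rewrite [(1%:M : 'M[R]_n.+1) l l]mxE eqxx.
  have rij : Rf a i j = tf a ^+ k * (c + tf a * Eij a).
    rewrite {1}(@resolvent_expand R n A (tf a) (Rf a) HR k.+1) entryDZ summxE big_ord_recr /=.
    rewrite big1 => [|m _]; last by rewrite mxE (cz _ (ltn_ord m)) mulr0.
    by rewrite add0r mxE exprSr mulrDr mulrA.
  have -> : dW A a i j = theta n.+1 a * ((ln (Rf a i i) + ln (Rf a j j)) / 2 - ln (Rf a i j)) by [].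
  rewrite rij !rdiag -/(Eii a) -/(Ejj a) /theta lt_eqF //.
  rewrite lnM ?posrE ?exprn_gt0 // lnXn //.
  have lt : ln (tf a) = ln a - ln (rho * a + 1) by rewrite -Ea ln_div ?posrE.
  rewrite lt -[_ *+ k]mulr_natl.
  have lna : ln a != 0 by rewrite lt_eqF // ln_lt0 // ap alt1.
  rewrite /G /L; field.
  exact: lna.
apply: cvg_trans (near_eq_cvg Heq) _.
exact: HG.
Unshelve. all: end_near.
Qed.
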